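(* Let $N$ be a pWF net with a transition $t^*$, and let $N^*$ be the pWF net consisting of a single fresh place $p^*$ (no transitions, no edges, input and output set $\{p^*\}$), so that $\mathrm{tc}(N^* )$ is the tWF net $t_i\to p^*\to t_o$ with fresh transitions $t_i,t_o$. If $N$ is sub-sound, then $N\otimes_{t^*}\mathrm{tc}(N^* )$ is sub-sound.
   Context: Petri nets and markings. A Petri net is a triple $(P,T,F)$ with $P$ a finite set of places, $T$ a finite set of transitions, $P\cap T=\emptyset$, and $F\subseteq (P\times T)\cup(T\times P)$. For a node $x$, $\bullet x=\{y\mid (y,x)\in F\}$, $x\bullet=\{y\mid (x,y)\in F\}$. A marking is a multiset over $P$ (a function $P\to\mathbb N$); sets of places are identified with bags of multiplicity one, $+,-,\le$ are pointwise, and $k.m$ is the sum of $k$ copies of $m$. Transition $t$ is enabled at $m$ iff $\bullet t\le m$, firing gives $m-\bullet t+t\bullet$, and $m\xrightarrow{*}m'$ denotes reachability by a finite (possibly empty) firing sequence. Workflow nets. A pWF net is $(P,T,F,I,O)$ with $(P,T,F)$ a Petri net, $I,O\subseteq P$ non-empty, every node reachable by a directed path from some node of $I$, and some node of $O$ reachable from every node. A tWF net is the same with $I,O$ non-empty subsets of $T$. Input nodes may have incoming edges and output nodes outgoing edges. The transition-completion $\mathrm{tc}(N)$ of a pWF net $N=(P,T,F,I,O)$ is obtained by adding two fresh transitions $t_i,t_o$ with $t_i\bullet=I$, $\bullet t_i=\emptyset$, $\bullet t_o=O$, $t_o\bullet=\emptyset$, and taking input set $\{t_i\}$ and output set $\{t_o\}$.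 Sub-soundness. A pWF net is sub-sound if for all integers $k\ge k'\ge 0$ and every marking $m'$: if $k.I\xrightarrow{*}m'+k'.O$ then $m'\xrightarrow{*}(k-k').O$. Transition substitution. For a WF net $N=(P,T,F,I,O)$ and a tWF net $M=(P',T',F',I',O')$ with disjoint node sets and $t\in T$, $N\otimes_t M$ is obtained from $N$ by deleting $t$ and all edges incident to $t$, adding all nodes and edges of $M$, adding an edge $(q,t')$ for each $q\in\bullet_N t$ and $t'\in I'$, and an edge $(t',q)$ for each $t'\in O'$ and $q\in t\bullet_N$; its input set is $(I\setminus\{t\})\cup I'$ if $t\in I$ and $I$ otherwise, and its output set is $(O\setminus\{t\})\cup O'$ if $t\in O$ and $O$ otherwise. *)

(* Defs.v *)
From mathcomp Require Import all_boot.
Set Implicit Arguments. Unset Strict Implicit. Unset Printing Implicit Defensive.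

(* A Petri net (P,T,F): finite types of places and transitions (disjoint by
   construction, as a sum type is used for nodes) and the flow relation F,
   split into its P x T part [pre] and its T x P part [post]. *)
Record net := Net {
  pl : finType;
  tr : finType;
  pre : pl -> tr -> bool;
  post : tr -> pl -> bool
}.

Definition node (N : net) : finType := (pl N + tr N)%type.

Definition flow (N : net) : rel (node N) :=
  fun x y => match x, y with
             | inl p, inr t => pre p t
             | inr t, inl p => post t p
             | _, _ => false
             end.

Definition marking (N : net) := {ffun pl N -> nat}.

Definition madd N (m1 m2 : marking N) : marking N := [ffun p => m1 p + m2 p].
Definition msub N (m1 m2 : marking N) : marking N := [ffun p => m1 p - m2 p].
Definition mle N (m1 m2 : marking N) : bool := [forall p, m1 p <= m2 p].
Definition mscale N (k : nat) (m : marking N) : marking N := [ffun p => k * m p].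
Definition mset N (A : {set pl N}) : marking N := [ffun p => nat_of_bool (p \in A)].

Definition preset N (t : tr N) : marking N := [ffun p => nat_of_bool (pre p t)].
Definition postset N (t : tr N) : marking N := [ffun p => nat_of_bool (post t p)].

Definition enabled N (t : tr N) (m : marking N) : bool := mle (preset t) m.
Definition fire N (t : tr N) (m : marking N) : marking N :=
  madd (msub m (preset t)) (postset t).

Inductive reach (N : net) : marking N -> marking N -> Prop :=
| reach_refl m : reach m m
| reach_step m t m' : enabled t m -> reach (fire t m) m' -> reach m m'.

Record pwf := PWF { pnet :> net; pI : {set pl pnet}; pO : {set pl pnet} }.
Record twf := TWF { tnet :> net; tI : {set tr tnet}; tO : {set tr tnet} }.

Definition is_pwf (N : pwf) : Prop :=
  [/\ pI N != set0, pO N != set0,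
      (forall x : node N, exists2 i, i \in pI N & connect (@flow N) (inl i) x)
    & (forall x : node N, exists2 o, o \in pO N & connect (@flow N) x (inl o))].

Definition is_twf (N : twf) : Prop :=
  [/\ tI N != set0, tO N != set0,
      (forall x : node N, exists2 i, i \in tI N & connect (@flow N) (inr i) x)
    & (forall x : node N, exists2 o, o \in tO N & connect (@flow N) x (inr o))].

Definition sub_sound (N : pwf) : Prop :=
  forall (k k' : nat) (m' : marking N), k' <= k ->
    reach (mscale k (mset (pI N))) (madd m' (mscale k' (mset (pO N)))) ->
    reach m' (mscale (k - k') (mset (pO N))).

(* fresh transitions: inr true = t_i, inr false = t_o *)
Definition tc_net (N : pwf) : net :=
  @Net (pl N) (tr N + bool)%type
    (fun p x => match x with
                | inl t => pre p t
                | inr true => false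
                | inr false => p \in pO N
                end)
    (fun x p => match x with
                | inl t => post t p
                | inr true => p \in pI N
                | inr false => false
                end).

Definition tc (N : pwf) : twf :=
  @TWF (tc_net N) [set inr true] [set inr false].

(* Node sets are made disjoint by taking sums: places P + P',
   transitions (T \ {t}) + T'.  Since N is a pWF net, t is not an input or
   output node of N, so the input/output sets are those of N. *)
Definition subst_net (N : pwf) (t : tr N) (M : twf) : net :=
  @Net (pl N + pl M)%type ({u : tr N | u != t} + tr M)%type
    (fun p x => match p, x with
                | inl q, inl u => pre q (val u)
                | inl q, inr t' => pre q t && (t' \in tI M)
                | inr _, inl _ => false
                | inr q, inr t' => pre q t'
                end)
    (fun x p => match x, p with
                | inl u, inl q => post (val u) q
                | inr t', inl q => (t' \in tO M) && post t q
                | inl _, inr _ => false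
                | inr t', inr q => post t' q
                end).

Arguments subst_net N t M : clear implicits.

Definition subst (N : pwf) (t : tr N) (M : twf) : pwf :=
  @PWF (subst_net N t M) [set inl q | q in pI N] [set inl q | q in pO N].

Arguments subst N t M : clear implicits.

Definition Nstar_net : net :=
  @Net unit void (fun _ _ => false) (fun _ _ => false).

Definition Nstar : pwf := @PWF Nstar_net [set: unit] [set: unit].

(* Main.v *)
Require Import Defs.
From mathcomp Require Import all_boot zify.

Section S.
Variables (N : pwf) (tstar : tr N).
Let N' := subst N tstar (tc Nstar).

Lemma reach_trans (M : net) (a b c : marking M) : reach a b -> reach b c -> reach a c.
Proof. elim=> // m t m' He _ IH Hc; apply: reach_step He (IH Hc). Qed.

Definition phi (m : marking N') : marking N :=
  [ffun p => m (inl p) + m (inr tt) * post tstar p].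
Definition lift (m : marking N) : marking N' :=
  [ffun x => match x with inl p => m p | inr _ => 0 end].

Lemma reach_phi m1 m2 : reach m1 m2 -> reach (phi m1) (phi m2).
Proof.
elim=> [m|m t m' He _ IH]; first exact: reach_refl.
move/forallP: He => He.
move: IH; case: t He => [[u Hu]|[[]|[]]] He IH.
- apply: (@reach_step _ _ u); last first.
    suff <- : phi (fire (inl (exist _ u Hu) : tr N') m) = fire u (phi m) by [].
    apply/ffunP => q; move: (He (inl q)); rewrite !ffunE /=.
    case: (pre q u) => /=; lia.
  apply/forallP => q; move: (He (inl q)); rewrite !ffunE /=; lia.
- apply: (@reach_step _ _ tstar); last first.
    suff <- : phi (fire (inr (inr true) : tr N') m) = fire tstar (phi m) by [].
    apply/ffunP => q; move: (He (inl q)); rewrite !ffunE /= !inE /= andbT.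
    case: (pre q tstar) => /=; lia.
  apply/forallP => q; move: (He (inl q)); rewrite !ffunE /= !inE /= andbT; lia.
- suff <- : phi (fire (inr (inr false) : tr N') m) = phi m by [].
  apply/ffunP => q; move: (He (inr tt)); rewrite !ffunE /= !inE /= andbF.
  case: (post tstar q) => /=; lia.
Qed.

Lemma reach_lift m1 m2 : reach m1 m2 -> reach (lift m1) (lift m2).
Proof.
elim=> [m|m t m' He _ IH]; first exact: reach_refl.
move/forallP: He => He.
have [Ht|Ht] := eqVneq t tstar.
- subst t.
  apply: (@reach_step _ _ (inr (inr true) : tr N')).
    apply/forallP => x; case: x => [q|[]]; rewrite !ffunE /= ?inE /= ?andbT //; by move: (He q); rewrite !ffunE.
  apply: (@reach_step _ _ (inr (inr false) : tr N')).
    apply/forallP => x; case: x => [q|[]]; rewrite !ffunE /= ?inE /= ?andbF //.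
  apply: reach_trans IH; suff -> : fire (inr (inr false) : tr N') (fire (inr (inr true) : tr N') (lift m)) = lift (fire tstar m) by exact: reach_refl.
  apply/ffunP => x; case: x => [q|[]]; rewrite !ffunE /= ?inE /= ?andbT ?andbF //.
  move: (He q); rewrite !ffunE /=; case: (pre q tstar) => /=; lia.
- apply: (@reach_step _ _ (inl (exist _ t Ht) : tr N')).
    apply/forallP => x; case: x => [q|[]]; rewrite !ffunE //=; move: (He q); rewrite !ffunE //=.
  suff -> : fire (inl (exist _ t Ht) : tr N') (lift m) = lift (fire t m) by [].
  apply/ffunP => x; case: x => [q|[]]; rewrite !ffunE //=; move: (He q); rewrite !ffunE //=.
Qed.

Lemma drain (m : marking N') : reach m (lift (phi m)).
Proof.
move: {2}(m (inr tt)) (erefl (m (inr tt))) => n; elim: n m => [|n IH] m Hn.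
  suff -> : lift (phi m) = m by exact: reach_refl.
  apply/ffunP => x; case: x => [q|[]]; rewrite !ffunE /= ?Hn //; lia.
apply: (@reach_step _ _ (inr (inr false) : tr N')).
  apply/forallP => x; case: x => [q|[]]; rewrite !ffunE /= ?inE /= ?andbF ?Hn //.
suff <- : phi (fire (inr (inr false) : tr N') m) = phi m.
  apply: IH; rewrite !ffunE /= Hn ?inE /=; lia.
apply/ffunP => q; rewrite !ffunE /= !inE /= andbF Hn.
case: (post tstar q) => /=; lia.
Qed.

Lemma inl_in (A : {set pl N}) q :
  ((inl q : pl N') \in [set inl x | x in A]) = (q \in A).
Proof.
apply/imsetP/idP => [[x Hx [->]]|Hq] //; by exists q.
Qed.

Lemma inr_in (A : {set pl N}) q :
  ((inr q : pl N') \in [set inl x | x in A]) = false.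
Proof. by apply/imsetP => -[x _]. Qed.

Lemma main_aux :
  is_pwf N -> sub_sound N -> sub_sound (subst N tstar (tc Nstar)).
Proof.
move=> _ HS k k' m' Hk H.
have H1 := reach_phi _ _ H.
have E1 : phi (mscale k (mset (pI (subst N tstar (tc Nstar))))) = mscale k (mset (pI N)).
  apply/ffunP => q; rewrite !ffunE /= inl_in inr_in; lia.
have E2 : phi (madd m' (mscale k' (mset (pO (subst N tstar (tc Nstar)))))) = madd (phi m') (mscale k' (mset (pO N))).
  apply/ffunP => q; rewrite !ffunE /= inl_in inr_in; lia.
rewrite E1 E2 in H1.
have H2 := reach_lift _ _ (HS _ _ _ Hk H1).
apply: reach_trans (drain m') _.
suff <- : lift (mscale (k - k') (mset (pO N))) = mscale (k - k') (mset (pO (subst N tstar (tc Nstar)))) by [].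
apply/ffunP => x; case: x => [q|[]]; rewrite !ffunE /= ?inl_in ?inr_in //; lia.
Qed.
End S.

Theorem mainTheorem10 (N : pwf) (tstar : tr N) :
  is_pwf N -> sub_sound N -> sub_sound (subst N tstar (tc Nstar)).
Proof. exact: main_aux. Qed.
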